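(* Let $S$ be a smooth surface in $\mathbb{R}^3$ which satisfies $aH + bK = c$ for some real constants $a,b,c$ with $a^2+b^2\neq 0$, where $H$ and $K$ denote the mean curvature and the Gauss curvature of $S$. Suppose $S$ is foliated by pieces of circles lying in a one-parameter family of parallel planes. Then either $S$ is a piece of a surface of revolution, or $S$ is part of one of the Riemann minimal examples, or $S$ is part of a generalized cone.
   Context: A generalized cone is a surface foliated by circles in parallel planes whose centres lie on a straight line and whose radius is a linear function; locally, after a rigid motion, it can be parametrized by $\mathbf{X}(u,v) = (f(u), g(u), u) + r(u)(\cos v, \sin v, 0)$ with $f$, $g$ and $r>0$ linear (affine) functions of $u$. It has $K=0$. The Riemann minimal examples are the minimal surfaces ($H=0$) discovered by Riemann which are foliated by circles in parallel planes but are not surfaces of revolution; locally, after a rigid motion, they are parametrized as $\mathbf{X}(u,v) = (f(u), g(u), u) + r(u)(\cos v, \sin v, 0)$ with $f' = \lambda r^2$, $g' = \mu r^2$ for constants $\lambda,\mu$ with $\lambda^2+\mu^2\neq 0$, and $1+(\lambda^2+\mu^2)r^4 + r'^2 - r r'' = 0$. The circles in parallel planes are not assumed a priori to be coaxial. *)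

(* Defs.v *)
From Stdlib Require Import Reals.
From Coquelicot Require Import Coquelicot.
Open Scope R_scope.

Definition v3 := (R * R * R)%type.
Definition c1 (p : v3) : R := fst (fst p).
Definition c2 (p : v3) : R := snd (fst p).
Definition c3 (p : v3) : R := snd p.
Definition dot (p q : v3) : R := c1 p * c1 q + c2 p * c2 q + c3 p * c3 q.
Definition cross (p q : v3) : v3 :=
  (c2 p * c3 q - c3 p * c2 q, c3 p * c1 q - c1 p * c3 q, c1 p * c2 q - c2 p * c1 q).
Definition vnorm (p : v3) : R := sqrt (dot p p).
Definition vscal (k : R) (p : v3) : v3 := (k * c1 p, k * c2 p, k * c3 p).

Definition dvec (h : R -> v3) (t : R) : v3 :=
  (Derive (fun s => c1 (h s)) t, Derive (fun s => c2 (h s)) t,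
   Derive (fun s => c3 (h s)) t).

Definition Xu (X : R -> R -> v3) (u v : R) : v3 := dvec (fun s => X s v) u.
Definition Xv (X : R -> R -> v3) (u v : R) : v3 := dvec (fun s => X u s) v.
Definition Xuu (X : R -> R -> v3) (u v : R) : v3 := dvec (fun s => Xu X s v) u.
Definition Xuv (X : R -> R -> v3) (u v : R) : v3 := dvec (fun s => Xu X u s) v.
Definition Xvv (X : R -> R -> v3) (u v : R) : v3 := dvec (fun s => Xv X u s) v.

Definition unit_normal (X : R -> R -> v3) (u v : R) : v3 :=
  vscal (/ vnorm (cross (Xu X u v) (Xv X u v))) (cross (Xu X u v) (Xv X u v)).

Definition fE X u v := dot (Xu X u v) (Xu X u v).
Definition fF X u v := dot (Xu X u v) (Xv X u v).
Definition fG X u v := dot (Xv X u v) (Xv X u v).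
Definition sL X u v := dot (Xuu X u v) (unit_normal X u v).
Definition sM X u v := dot (Xuv X u v) (unit_normal X u v).
Definition sN X u v := dot (Xvv X u v) (unit_normal X u v).

Definition gauss_curv (X : R -> R -> v3) (u v : R) : R :=
  (sL X u v * sN X u v - sM X u v ^ 2) / (fE X u v * fG X u v - fF X u v ^ 2).
Definition mean_curv (X : R -> R -> v3) (u v : R) : R :=
  (fE X u v * sN X u v - 2 * fF X u v * sM X u v + fG X u v * sL X u v)
  / (2 * (fE X u v * fG X u v - fF X u v ^ 2)).

Definition smooth_on (a b : R) (h : R -> R) : Prop :=
  forall (n : nat) (x : R), a < x < b -> ex_derive_n h n x.

(* Surface foliated by (pieces of) circles in the horizontal planes z = u:
   X(u,v) = (f(u), g(u), u) + r(u) (cos v, sin v, 0). *)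
Definition circle_surface (f g r : R -> R) : R -> R -> v3 :=
  fun u v => (f u + r u * cos v, g u + r u * sin v, u).

(* Surface of revolution: the circles are coaxial (centres on a vertical line). *)
Definition is_revolution (u0 u1 : R) (f g r : R -> R) : Prop :=
  exists f0 g0 : R, forall u, u0 < u < u1 -> f u = f0 /\ g u = g0.

Definition is_riemann_example (u0 u1 : R) (f g r : R -> R) : Prop :=
  exists lam mu : R, lam ^ 2 + mu ^ 2 <> 0 /\
    forall u, u0 < u < u1 ->
      Derive f u = lam * r u ^ 2 /\ Derive g u = mu * r u ^ 2 /\
      1 + (lam ^ 2 + mu ^ 2) * r u ^ 4 + Derive r u ^ 2
        - r u * Derive_n r 2 u = 0.

Definition is_generalized_cone (u0 u1 : R) (f g r : R -> R) : Prop :=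
  exists a1 b1 a2 b2 a3 b3 : R, forall u, u0 < u < u1 ->
    f u = a1 * u + b1 /\ g u = a2 * u + b2 /\ r u = a3 * u + b3.

(* Main.v *)
Require Import Defs.
From Stdlib Require Import Reals.
From Coquelicot Require Import Coquelicot.
From Stdlib Require Import Lra List Classical_Prop.
Import ListNotations.
Open Scope R_scope.

Fixpoint Peval (p : list R) (x : R) : R :=
  match p with nil => 0 | a :: p' => a + x * Peval p' x end.
Fixpoint padd (p q : list R) : list R :=
  match p with
  | nil => q
  | a :: p' => match q with nil => p | b :: q' => (a + b) :: padd p' q' end
  end.
Definition pscal (k : R) (p : list R) : list R := map (fun a => k * a) p.
Fixpoint pmul (p q : list R) : list R :=
  match p with nil => nil | a :: p' => padd (pscal a q) (0 :: pmul p' q) end.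

Definition cp := (R * R)%type.
Definition cadd (z w : cp) : cp := (fst z + fst w, snd z + snd w).
Definition cmul (z w : cp) : cp :=
  (fst z * fst w - snd z * snd w, fst z * snd w + snd z * fst w).
Fixpoint Ceval (p : list R) (z : cp) : cp :=
  match p with nil => (0, 0) | a :: p' => cadd (a, 0) (cmul z (Ceval p' z)) end.
Definition norm2 (z : cp) : R := fst z ^ 2 + snd z ^ 2.

Lemma Peval_add p q x : Peval (padd p q) x = Peval p x + Peval q x.
Proof.
  revert q; induction p as [|a p IH]; intros [|b q]; simpl; try ring.
  rewrite IH; ring.
Qed.
Lemma Peval_scal k p x : Peval (pscal k p) x = k * Peval p x.
Proof. induction p as [|a p IH]; simpl; [ring| rewrite IH; ring]. Qed.
Lemma Peval_mul p q x : Peval (pmul p q) x = Peval p x * Peval q x.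
Proof.
  induction p as [|a p IH]; simpl; [ring|].
  rewrite Peval_add, Peval_scal; simpl; rewrite IH; ring.
Qed.

Lemma cp_eq (z w : cp) : fst z = fst w -> snd z = snd w -> z = w.
Proof. destruct z, w; simpl; intros; subst; reflexivity. Qed.

Lemma Ceval_add p q z : Ceval (padd p q) z = cadd (Ceval p z) (Ceval q z).
Proof.
  revert q; induction p as [|a p IH]; intros [|b q]; simpl;
    try (apply cp_eq; unfold cadd, cmul; simpl; ring).
  rewrite IH. apply cp_eq; unfold cadd, cmul; simpl; ring.
Qed.
Lemma Ceval_scal k p z : Ceval (pscal k p) z = cmul (k, 0) (Ceval p z).
Proof.
  induction p as [|a p IH]; simpl.
  - apply cp_eq; unfold cadd, cmul; simpl; ring.
  - rewrite IH. apply cp_eq; unfold cadd, cmul; simpl; ring.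
Qed.
Lemma Ceval_mul p q z : Ceval (pmul p q) z = cmul (Ceval p z) (Ceval q z).
Proof.
  induction p as [|a p IH]; simpl.
  - apply cp_eq; unfold cadd, cmul; simpl; ring.
  - rewrite Ceval_add, Ceval_scal; simpl; rewrite IH.
    apply cp_eq; unfold cadd, cmul; simpl; ring.
Qed.

Lemma Peval_bound p : exists M, forall T, 0 <= T <= 1 -> Rabs (Peval p T) <= M.
Proof.
  induction p as [|a p [M HM]]; simpl.
  - exists 0; intros; rewrite Rabs_R0; lra.
  - exists (Rabs a + Rabs M); intros T HT.
    eapply Rle_trans; [apply Rabs_triang|].
    apply Rplus_le_compat_l. rewrite Rabs_mult.
    specialize (HM T HT).
    assert (Rabs T <= 1) by (rewrite Rabs_pos_eq; lra).
    assert (M <= Rabs M) by apply RRle_abs.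
    assert (0 <= Rabs (Peval p T)) by apply Rabs_pos.
    assert (0 <= Rabs T) by apply Rabs_pos.
    nra.
Qed.

Lemma head_zero a p eps : 0 < eps ->
  (forall T, 0 < T < eps -> a + T * Peval p T = 0) -> a = 0.
Proof.
  intros Heps H.
  destruct (Peval_bound p) as [M HM].
  destruct (Req_dec a 0) as [|Ha]; [assumption|exfalso].
  assert (HaP : 0 < Rabs a) by (apply Rabs_pos_lt; auto).
  assert (HM0 : 0 <= Rabs M) by apply Rabs_pos.
  set (T := Rmin (Rmin (eps/2) (1/2)) (Rabs a / (2 * (Rabs M + 1)))).
  assert (HT1 : T <= eps/2) by (unfold T; eapply Rle_trans; [apply Rmin_l| apply Rmin_l]).
  assert (HT2 : T <= 1/2) by (unfold T; eapply Rle_trans; [apply Rmin_l| apply Rmin_r]).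
  assert (HT3 : T <= Rabs a / (2 * (Rabs M + 1))) by (unfold T; apply Rmin_r).
  assert (HT0 : 0 < T).
  { unfold T. apply Rmin_glb_lt; [apply Rmin_glb_lt; lra|].
    apply Rdiv_lt_0_compat; lra. }
  specialize (H T ltac:(lra)).
  assert (Ha' : a = - (T * Peval p T)) by lra.
  specialize (HM T ltac:(lra)).
  assert (Rabs a <= T * Rabs M).
  { rewrite Ha', Rabs_Ropp, Rabs_mult, (Rabs_pos_eq T) by lra.
    apply Rmult_le_compat_l; [lra|]. eapply Rle_trans; [apply HM| apply RRle_abs]. }
  assert (T * (2 * (Rabs M + 1)) <= Rabs a).
  { apply (Rmult_le_compat_r (2 * (Rabs M + 1))) in HT3; [|lra].
    unfold Rdiv in HT3. rewrite Rmult_assoc, Rinv_l in HT3; lra. }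
  nra.
Qed.

Lemma Peval_zero p eps : 0 < eps ->
  (forall T, 0 < T < eps -> Peval p T = 0) -> List.Forall (fun a => a = 0) p.
Proof.
  intros Heps. induction p as [|a p IH]; intros H; [constructor|].
  assert (Ha : a = 0) by (apply (head_zero a p eps Heps); intros; apply H; auto).
  constructor; [auto|].
  apply IH. intros T HT. specialize (H T HT). simpl in H.
  subst a. rewrite Rplus_0_l in H. apply Rmult_integral in H. destruct H; [lra|auto].
Qed.

Lemma Ceval_zero p z : List.Forall (fun a => a = 0) p -> Ceval p z = (0, 0).
Proof.
  induction 1; simpl; auto. rewrite IHForall; subst.
  apply cp_eq; unfold cadd, cmul; simpl; ring.
Qed.

Lemma evali p eps : 0 < eps ->
  (forall T, 0 < T < eps -> Peval p T = 0) -> Ceval p (0, 1) = (0, 0).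
Proof. intros; apply Ceval_zero; eapply Peval_zero; eauto. Qed.

Lemma norm2_mul z w : norm2 (cmul z w) = norm2 z * norm2 w.
Proof. destruct z, w; unfold norm2, cmul; simpl; ring. Qed.
Lemma norm2_zero z : norm2 z = 0 -> z = (0, 0).
Proof.
  destruct z as [x y]; unfold norm2; simpl; intros H.
  assert (x = 0) by nra. assert (y = 0) by nra. subst; auto.
Qed.
Lemma cmul_eq0 z w : cmul z w = (0, 0) -> z = (0, 0) \/ w = (0, 0).
Proof.
  intros H. assert (H2 : norm2 (cmul z w) = 0) by (rewrite H; unfold norm2; simpl; ring).
  rewrite norm2_mul in H2. apply Rmult_integral in H2.
  destruct H2; [left|right]; apply norm2_zero; auto.
Qed.
Lemma cmul_0l z : cmul (0, 0) z = (0, 0).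
Proof. apply cp_eq; unfold cmul; simpl; ring. Qed.
Lemma cmul_0r z : cmul z (0, 0) = (0, 0).
Proof. apply cp_eq; unfold cmul; simpl; ring. Qed.
Lemma cadd_0l z : cadd (0, 0) z = z.
Proof. destruct z; apply cp_eq; unfold cadd; simpl; ring. Qed.
Lemma cadd_0r z : cadd z (0, 0) = z.
Proof. destruct z; apply cp_eq; unfold cadd; simpl; ring. Qed.
Lemma cscal_eq0 k z : k <> 0 -> cmul (k, 0) z = (0, 0) -> z = (0, 0).
Proof.
  intros Hk H. destruct (cmul_eq0 _ _ H) as [H'|]; auto.
  injection H'; intros; contradiction.
Qed.

(* basic polynomials for the half-angle substitution *)
Definition PD : list R := [1; 0; 1].
Definition PX (c s : R) : list R := [c; -2 * s; - c].
Definition PY (c s : R) : list R := [s; 2 * c; - s].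
Definition Lpoly c s l0 l1 l2 :=
  padd (pscal l0 PD) (padd (pscal l1 (PX c s)) (pscal l2 (PY c s))).
Definition xT c s T := (c * (1 - T ^ 2) - s * (2 * T)) / (1 + T ^ 2).
Definition yT c s T := (s * (1 - T ^ 2) + c * (2 * T)) / (1 + T ^ 2).

Lemma D_pos T : 0 < 1 + T ^ 2.
Proof. nra. Qed.

Lemma Peval_PD T : Peval PD T = 1 + T ^ 2.
Proof. unfold PD; simpl; ring. Qed.
Lemma Peval_L c s l0 l1 l2 T :
  Peval (Lpoly c s l0 l1 l2) T = (1 + T ^ 2) * (l0 + l1 * xT c s T + l2 * yT c s T).
Proof.
  unfold Lpoly, xT, yT. rewrite !Peval_add, !Peval_scal. unfold PD, PX, PY; simpl.
  field. pose proof (D_pos T); lra.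
Qed.
Lemma Ceval_PD : Ceval PD (0, 1) = (0, 0).
Proof. apply cp_eq; unfold PD, cadd, cmul; simpl; ring. Qed.
Lemma Ceval_L c s l0 l1 l2 :
  Ceval (Lpoly c s l0 l1 l2) (0, 1) = cmul (l1, l2) (2 * c, -2 * s).
Proof.
  unfold Lpoly. rewrite !Ceval_add, !Ceval_scal, Ceval_PD.
  apply cp_eq; unfold PX, PY, cadd, cmul; simpl; ring.
Qed.
Lemma L_zero c s l1 l2 : c ^ 2 + s ^ 2 = 1 ->
  cmul (l1, l2) (2 * c, -2 * s) = (0, 0) -> l1 = 0 /\ l2 = 0.
Proof.
  intros Hcs H. destruct (cmul_eq0 _ _ H) as [H'|H'].
  - injection H'; auto.
  - injection H'; intros. nra.
Qed.

Lemma trig_T v0 v1 (G : R -> R -> Prop) : v0 < v1 ->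
  (forall v, v0 < v < v1 -> G (cos v) (sin v)) ->
  exists c s eps, c ^ 2 + s ^ 2 = 1 /\ 0 < eps /\
    forall T, 0 < T < eps -> G (xT c s T) (yT c s T).
Proof.
  intros Hv HG.
  set (d := Rmin (v1 - v0) 1).
  assert (Hd0 : 0 < d) by (unfold d; apply Rmin_glb_lt; lra).
  assert (Hd1 : d <= v1 - v0) by apply Rmin_l.
  assert (Hd2 : d <= 1) by apply Rmin_r.
  pose proof PI2_1 as HPI.
  exists (cos v0), (sin v0), (tan (d / 2)).
  split; [pose proof (sin2_cos2 v0); unfold Rsqr in *; lra|].
  split; [apply tan_gt_0; lra|].
  intros T HT.
  assert (Ha1 : 0 < atan T) by (rewrite <- atan_0; apply atan_increasing; lra).
  assert (Ha2 : atan T < d / 2).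
  { rewrite <- (atan_tan (d/2)) by lra. apply atan_increasing; lra. }
  specialize (HG (v0 + 2 * atan T) ltac:(lra)).
  assert (Hs : sqrt (1 + T²) ^ 2 = 1 + T ^ 2).
  { simpl. rewrite Rmult_1_r, sqrt_sqrt; [unfold Rsqr; ring| unfold Rsqr; nra]. }
  assert (Hsp : 0 < sqrt (1 + T²)) by (apply sqrt_lt_R0; unfold Rsqr; nra).
  replace (xT (cos v0) (sin v0) T) with (cos (v0 + 2 * atan T)).
  replace (yT (cos v0) (sin v0) T) with (sin (v0 + 2 * atan T)).
  exact HG.
  - rewrite sin_plus, sin_2a, cos_2a, cos_atan, sin_atan. unfold yT.
    field_simplify; try (split; nra); try nra. rewrite Hs. field. nra.
  - rewrite cos_plus, sin_2a, cos_2a, cos_atan, sin_atan. unfold xT.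
    field_simplify; try (split; nra); try nra. rewrite Hs. field. nra.
Qed.

Lemma loc_int u0 u1 u : u0 < u < u1 -> locally u (fun s => u0 < s < u1).
Proof.
  intros H. apply (open_and (fun s => u0 < s) (fun s => s < u1)).
  apply open_gt. apply open_lt. exact H.
Qed.

Lemma D_lin (f r : R -> R) k u : ex_derive f u -> ex_derive r u ->
  Derive (fun s => f s + r s * k) u = Derive f u + Derive r u * k.
Proof. intros. apply is_derive_unique. auto_derive. repeat split; auto. rewrite !Rmult_1_l; reflexivity. Qed.
Lemma D_cos A B v : Derive (fun s => A + B * cos s) v = - (B * sin v).
Proof. apply is_derive_unique. auto_derive; auto. ring. Qed.
Lemma D_sin A B v : Derive (fun s => A + B * sin s) v = B * cos v.
Proof. apply is_derive_unique. auto_derive; auto. ring. Qed.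

Lemma sm1 u0 u1 f u : smooth_on u0 u1 f -> u0 < u < u1 -> ex_derive f u.
Proof. intros H Hu. exact (H 1%nat u Hu). Qed.
Lemma sm2 u0 u1 f u : smooth_on u0 u1 f -> u0 < u < u1 -> ex_derive (Derive f) u.
Proof. intros H Hu. exact (H 2%nat u Hu). Qed.

Section G.
Variables (u0 u1 : R) (f g r : R -> R).
Hypotheses (Hf : smooth_on u0 u1 f) (Hg : smooth_on u0 u1 g) (Hr : smooth_on u0 u1 r).
Let X := circle_surface f g r.

Lemma Xu_eq u v : u0 < u < u1 ->
  Xu X u v = (Derive f u + Derive r u * cos v, Derive g u + Derive r u * sin v, 1).
Proof.
  intros Hu. unfold Xu, dvec, X, circle_surface. cbv [Defs.c1 Defs.c2 Defs.c3 fst snd].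
  rewrite !D_lin, Derive_id; eauto using sm1.
Qed.
Lemma Xv_eq u v : Xv X u v = (- (r u * sin v), r u * cos v, 0).
Proof.
  unfold Xv, dvec, X, circle_surface, Defs.c1, Defs.c2, Defs.c3; simpl.
  rewrite D_cos, D_sin, Derive_const; auto.
Qed.
Lemma Xuu_eq u v : u0 < u < u1 ->
  Xuu X u v = (Derive (Derive f) u + Derive (Derive r) u * cos v,
               Derive (Derive g) u + Derive (Derive r) u * sin v, 0).
Proof.
  intros Hu. unfold Xuu, dvec at 1. unfold Defs.c1 at 1, Defs.c2 at 1, Defs.c3 at 1. simpl.
  rewrite (Derive_ext_loc (fun s => Defs.c1 (Xu X s v)) (fun s => Derive f s + Derive r s * cos v)).
  rewrite (Derive_ext_loc (fun s => Defs.c2 (Xu X s v)) (fun s => Derive g s + Derive r s * sin v)).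
  rewrite (Derive_ext (fun s => Defs.c3 (Xu X s v)) (fun s => 1)).
  - rewrite !D_lin, Derive_const; eauto using sm2.
  - intros s. unfold Xu, dvec, X, circle_surface, Defs.c3; simpl. apply Derive_id.
  - eapply filter_imp; [|apply (loc_int u0 u1 u Hu)].
    intros s Hs. rewrite Xu_eq; auto.
  - eapply filter_imp; [|apply (loc_int u0 u1 u Hu)].
    intros s Hs. rewrite Xu_eq; auto.
Qed.
Lemma Xuv_eq u v : u0 < u < u1 ->
  Xuv X u v = (- (Derive r u * sin v), Derive r u * cos v, 0).
Proof.
  intros Hu. unfold Xuv, dvec at 1. unfold Defs.c1 at 1, Defs.c2 at 1, Defs.c3 at 1. simpl.
  rewrite (Derive_ext (fun s => Defs.c1 (Xu X u s)) (fun s => Derive f u + Derive r u * cos s)).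
  rewrite (Derive_ext (fun s => Defs.c2 (Xu X u s)) (fun s => Derive g u + Derive r u * sin s)).
  rewrite (Derive_ext (fun s => Defs.c3 (Xu X u s)) (fun s => 1)).
  - rewrite D_cos, D_sin, Derive_const; auto.
  - intros s. rewrite Xu_eq; auto.
  - intros s. rewrite Xu_eq; auto.
  - intros s. rewrite Xu_eq; auto.
Qed.
Lemma Xvv_eq u v : Xvv X u v = (- (r u * cos v), - (r u * sin v), 0).
Proof.
  unfold Xvv, dvec at 1. unfold Defs.c1 at 1, Defs.c2 at 1, Defs.c3 at 1. simpl.
  rewrite (Derive_ext (fun s => Defs.c1 (Xv X u s)) (fun s => 0 + (- r u) * sin s)).
  rewrite (Derive_ext (fun s => Defs.c2 (Xv X u s)) (fun s => 0 + r u * cos s)).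
  rewrite (Derive_ext (fun s => Defs.c3 (Xv X u s)) (fun s => 0)).
  - rewrite D_cos, D_sin, Derive_const. f_equal; try f_equal; try ring.
  - intros s. rewrite Xv_eq; auto.
  - intros s. rewrite Xv_eq; unfold Defs.c2; simpl; ring.
  - intros s. rewrite Xv_eq; unfold Defs.c1; simpl; ring.
Qed.
End G.

Lemma key (X : R -> R -> v3) u v (a b c r al be ga al2 be2 ga2 x y : R) :
  0 < r -> 0 < x ^ 2 + y ^ 2 ->
  Xu X u v = (al + ga * x, be + ga * y, 1) ->
  Xv X u v = (- (r * y), r * x, 0) ->
  Xuu X u v = (al2 + ga2 * x, be2 + ga2 * y, 0) ->
  Xuv X u v = (- (ga * y), ga * x, 0) ->
  Xvv X u v = (- (r * x), - (r * y), 0) ->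
  a * mean_curv X u v + b * gauss_curv X u v = c ->
  a * (x ^ 2 + y ^ 2) * (1 + al ^ 2 + be ^ 2 + 2 * ga * (al * x + be * y) + ga ^ 2 * (x ^ 2 + y ^ 2)
      - r * (al2 * x + be2 * y + ga2 * (x ^ 2 + y ^ 2)))
    * sqrt (x ^ 2 + y ^ 2 + (al * x + be * y + ga * (x ^ 2 + y ^ 2)) ^ 2)
  - 2 * b * (x ^ 2 + y ^ 2) * (al2 * x + be2 * y + ga2 * (x ^ 2 + y ^ 2))
  = 2 * c * r * sqrt (x ^ 2 + y ^ 2 + (al * x + be * y + ga * (x ^ 2 + y ^ 2)) ^ 2) ^ 4.
Proof.
  intros Hr He H1 H2 H3 H4 H5 Hc. subst c.
  set (S := sqrt (x ^ 2 + y ^ 2 + (al * x + be * y + ga * (x ^ 2 + y ^ 2)) ^ 2)).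
  assert (HS2 : S ^ 2 = x ^ 2 + y ^ 2 + (al * x + be * y + ga * (x ^ 2 + y ^ 2)) ^ 2).
  { unfold S. rewrite <- Rsqr_pow2, Rsqr_sqrt; [auto| pose proof (pow2_ge_0 (al * x + be * y + ga * (x ^ 2 + y ^ 2))); lra]. }
  assert (HS : 0 < S) by (unfold S; apply sqrt_lt_R0; pose proof (pow2_ge_0 (al * x + be * y + ga * (x ^ 2 + y ^ 2))); lra).
  unfold mean_curv, gauss_curv, sL, sM, sN, fE, fF, fG, unit_normal.
  rewrite H1, H2, H3, H4, H5.
  unfold vnorm, vscal, cross, dot. cbv [Defs.c1 Defs.c2 Defs.c3 fst snd].
  match goal with |- context [sqrt ?z] => replace (sqrt z) with (r * S) end.
  2: { match goal with |- _ = sqrt ?z => replace z with ((r * S) ^ 2) end.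
       - rewrite sqrt_pow2; nra.
       - transitivity (r ^ 2 * S ^ 2); [ring| rewrite HS2; ring]. }
  clearbody S.
  assert (HEG : ((al + ga * x) * (al + ga * x) + (be + ga * y) * (be + ga * y) + 1 * 1) *
     (- (r * y) * - (r * y) + r * x * (r * x) + 0 * 0) -
     ((al + ga * x) * - (r * y) + (be + ga * y) * (r * x) + 1 * 0) ^ 2 = r ^ 2 * S ^ 2)
    by (rewrite HS2; ring).
  rewrite HEG.
  field_simplify; [| split; lra].
  match goal with |- ?L = ?N / ?Dn => replace N with (L * Dn) by ring end.
  field. lra.
Qed.

Definition pl (ga al be x y : R) := ga + al * x + be * y.
Definition phi0 r al be ga ga2 := 1 + al ^ 2 + be ^ 2 + ga ^ 2 - r * ga2.
Definition phic r al ga al2 := 2 * ga * al - r * al2.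

Definition HP (a b c r al be ga al2 be2 ga2 x y : R) : Prop :=
  a * 1 * (1 + al ^ 2 + be ^ 2 + 2 * ga * (al * x + be * y) + ga ^ 2 * 1
      - r * (al2 * x + be2 * y + ga2 * 1))
    * sqrt (1 + (al * x + be * y + ga * 1) ^ 2)
  - 2 * b * 1 * (al2 * x + be2 * y + ga2 * 1)
  = 2 * c * r * sqrt (1 + (al * x + be * y + ga * 1) ^ 2) ^ 4.

Lemma HP_sq a b c r al be ga al2 be2 ga2 x y :
  HP a b c r al be ga al2 be2 ga2 x y ->
  a ^ 2 * pl (phi0 r al be ga ga2) (phic r al ga al2) (phic r be ga be2) x y ^ 2
    * (1 + pl ga al be x y ^ 2)
  - (2 * b * pl ga2 al2 be2 x y + 2 * c * r * (1 + pl ga al be x y ^ 2) ^ 2) ^ 2 = 0.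
Proof.
  unfold HP. set (S := sqrt (1 + (al * x + be * y + ga * 1) ^ 2)).
  assert (HS2 : S ^ 2 = 1 + pl ga al be x y ^ 2).
  { unfold S. rewrite <- Rsqr_pow2, Rsqr_sqrt.
    - unfold pl; ring.
    - pose proof (pow2_ge_0 (al * x + be * y + ga * 1)); lra. }
  clearbody S. intros H.
  assert (H' : a * pl (phi0 r al be ga ga2) (phic r al ga al2) (phic r be ga be2) x y * S
     = 2 * b * pl ga2 al2 be2 x y + 2 * c * r * S ^ 4).
  { unfold pl, phi0, phic. rewrite <- H. ring. }
  replace ((1 + pl ga al be x y ^ 2) ^ 2) with (S ^ 4) by (rewrite <- HS2; ring).
  rewrite <- H', <- HS2. ring.
Qed.

Lemma HP_lin a b r al be ga al2 be2 ga2 x y :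
  HP a b 0 r al be ga al2 be2 ga2 x y ->
  a * pl (phi0 r al be ga ga2) (phic r al ga al2) (phic r be ga be2) x y
    * sqrt (1 + pl ga al be x y ^ 2) = 2 * b * pl ga2 al2 be2 x y.
Proof.
  unfold HP. intros H.
  replace (1 + pl ga al be x y ^ 2) with (1 + (al * x + be * y + ga * 1) ^ 2) by (unfold pl; ring).
  unfold pl, phi0, phic. 
  match type of H with ?L = _ => replace (2 * b * (ga2 + al2 * x + be2 * y)) with (2 * b * (ga2 + al2 * x + be2 * y) + L) end.
  - ring.
  - rewrite H. ring.
Qed.

Lemma Peval_L' c s l0 l1 l2 T :
  Peval (Lpoly c s l0 l1 l2) T = (1 + T ^ 2) * pl l0 l1 l2 (xT c s T) (yT c s T).
Proof. rewrite Peval_L; unfold pl; ring. Qed.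

Lemma csq_eq0 z : cmul z z = (0, 0) -> z = (0, 0).
Proof. intros H; destruct (cmul_eq0 _ _ H); auto. Qed.

Ltac crw := repeat (first [rewrite Ceval_add | rewrite Ceval_mul | rewrite Ceval_scal
  | rewrite Ceval_L | rewrite Ceval_PD | rewrite cmul_0l | rewrite cmul_0r
  | rewrite cadd_0l | rewrite cadd_0r]).
Ltac crw_in H := repeat (first [rewrite Ceval_add in H | rewrite Ceval_mul in H
  | rewrite Ceval_scal in H
  | rewrite Ceval_L in H | rewrite Ceval_PD in H | rewrite cmul_0l in H | rewrite cmul_0r in H
  | rewrite cadd_0l in H | rewrite cadd_0r in H]).
Ltac prw := repeat (first [rewrite Peval_add | rewrite Peval_mul | rewrite Peval_scal
  | rewrite Peval_L' | rewrite Peval_PD]).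

Lemma pt_c_nz a b c r al be ga al2 be2 ga2 v0 v1 : v0 < v1 -> 0 < r -> c <> 0 ->
  (forall v, v0 < v < v1 -> HP a b c r al be ga al2 be2 ga2 (cos v) (sin v)) ->
  al = 0 /\ be = 0.
Proof.
  intros Hv Hr Hc H.
  destruct (trig_T v0 v1 (fun x y =>
    a ^ 2 * pl (phi0 r al be ga ga2) (phic r al ga al2) (phic r be ga be2) x y ^ 2
    * (1 + pl ga al be x y ^ 2)
    - (2 * b * pl ga2 al2 be2 x y + 2 * c * r * (1 + pl ga al be x y ^ 2) ^ 2) ^ 2 = 0)
    Hv (fun v Hv => HP_sq _ _ _ _ _ _ _ _ _ _ _ _ (H v Hv)))
    as [cc [ss [eps [Hcs [Heps HT]]]]].
  set (P1 := Lpoly cc ss ga al be).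
  set (Q1 := Lpoly cc ss ga2 al2 be2).
  set (F1 := Lpoly cc ss (phi0 r al be ga ga2) (phic r al ga al2) (phic r be ga be2)).
  set (S1 := padd (pmul PD PD) (pmul P1 P1)).
  set (D4 := pmul (pmul PD PD) (pmul PD PD)).
  set (D3 := pmul PD (pmul PD PD)).
  set (Z := padd (pscal (2 * b) (pmul Q1 D3)) (pscal (2 * c * r) (pmul S1 S1))).
  set (big := padd (pscal (a ^ 2) (pmul (pmul F1 F1) (pmul S1 D4))) (pscal (-1) (pmul Z Z))).
  assert (HZ : forall T, 0 < T < eps -> Peval big T = 0).
  { intros T HT0. specialize (HT T HT0).
    unfold big, Z, D3, D4, S1, F1, Q1, P1. prw.
    match type of HT with ?G = 0 => transitivity ((1 + T ^ 2) ^ 8 * G) end.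
    - ring.
    - rewrite HT; ring. }
  apply evali in HZ; [|exact Heps].
  unfold big, Z, D3, D4, S1, F1, Q1, P1 in HZ. crw_in HZ.
  apply cscal_eq0 in HZ; [|lra].
  apply csq_eq0 in HZ.
  apply cscal_eq0 in HZ; [|nra].
  apply csq_eq0, csq_eq0 in HZ.
  apply (L_zero cc ss); auto.
Qed.

Lemma pt_lin l0 l1 l2 v0 v1 : v0 < v1 ->
  (forall v, v0 < v < v1 -> pl l0 l1 l2 (cos v) (sin v) = 0) ->
  l0 = 0 /\ l1 = 0 /\ l2 = 0.
Proof.
  intros Hv H.
  destruct (trig_T v0 v1 (fun x y => pl l0 l1 l2 x y = 0) Hv H)
    as [cc [ss [eps [Hcs [Heps HT]]]]].
  assert (HZ : forall T, 0 < T < eps -> Peval (Lpoly cc ss l0 l1 l2) T = 0).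
  { intros T HT0. rewrite Peval_L', HT; auto. ring. }
  apply evali in HZ; [|exact Heps]. rewrite Ceval_L in HZ.
  destruct (L_zero cc ss l1 l2 Hcs HZ) as [-> ->].
  specialize (H ((v0 + v1) / 2) ltac:(lra)). unfold pl in H.
  repeat split; auto. lra.
Qed.

Lemma cscal_k0 k z : cmul (k, 0) z = (0, 0) -> z <> (0, 0) -> k = 0.
Proof.
  intros H Hz. destruct (cmul_eq0 _ _ H) as [H'|H']; [|contradiction].
  injection H'; auto.
Qed.

Lemma Pi_nz cc ss al be : cc ^ 2 + ss ^ 2 = 1 -> ~ (al = 0 /\ be = 0) ->
  cmul (al, be) (2 * cc, -2 * ss) <> (0, 0).
Proof.
  intros Hcs Hab H. destruct (cmul_eq0 _ _ H) as [H'|H'].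
  - injection H'; auto.
  - injection H'; intros; nra.
Qed.

Lemma pt_quad A B C ga al be v0 v1 : v0 < v1 -> ~ (al = 0 /\ be = 0) ->
  (forall v, v0 < v < v1 ->
     A + B * pl ga al be (cos v) (sin v) + C * pl ga al be (cos v) (sin v) ^ 2 = 0) ->
  A = 0 /\ B = 0 /\ C = 0.
Proof.
  intros Hv Hab H.
  destruct (trig_T v0 v1 (fun x y => A + B * pl ga al be x y + C * pl ga al be x y ^ 2 = 0) Hv H)
    as [cc [ss [eps [Hcs [Heps HT]]]]].
  set (P1 := Lpoly cc ss ga al be).
  set (big := padd (pscal A (pmul PD PD)) (padd (pscal B (pmul PD P1)) (pscal C (pmul P1 P1)))).
  assert (HZ : forall T, 0 < T < eps -> Peval big T = 0).
  { intros T HT0. specialize (HT T HT0). unfold big, P1. prw.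
    match type of HT with ?G = 0 => transitivity ((1 + T ^ 2) ^ 2 * G) end.
    - ring.
    - rewrite HT; ring. }
  apply evali in HZ; [|exact Heps].
  unfold big, P1 in HZ. crw_in HZ.
  apply cscal_k0 in HZ.
  2: { intros H'. apply csq_eq0 in H'. apply (Pi_nz cc ss al be); auto. }
  subst C.
  assert (Hl : forall v, v0 < v < v1 -> pl (A + B * ga) (B * al) (B * be) (cos v) (sin v) = 0).
  { intros v Hv'. rewrite <- (H v Hv'). unfold pl. ring. }
  destruct (pt_lin _ _ _ v0 v1 Hv Hl) as [H0 [H1 H2]].
  assert (B = 0).
  { destruct (Req_dec al 0); destruct (Req_dec be 0).
    - exfalso; auto.
    - apply Rmult_integral in H2; destruct H2; auto; contradiction.
    - apply Rmult_integral in H1; destruct H1; auto; contradiction.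
    - apply Rmult_integral in H1; destruct H1; auto; contradiction. }
  subst B. repeat split; lra.
Qed.

Lemma sqrt_pos1 p : 0 < sqrt (1 + p ^ 2).
Proof. apply sqrt_lt_R0. pose proof (pow2_ge_0 p); lra. Qed.

Lemma pt_K0 b r al be ga al2 be2 ga2 v0 v1 : v0 < v1 -> b <> 0 ->
  (forall v, v0 < v < v1 -> HP 0 b 0 r al be ga al2 be2 ga2 (cos v) (sin v)) ->
  ga2 = 0 /\ al2 = 0 /\ be2 = 0.
Proof.
  intros Hv Hb H. apply (pt_lin _ _ _ v0 v1 Hv).
  intros v Hv'. specialize (H v Hv'). apply HP_lin in H.
  assert (2 * b * pl ga2 al2 be2 (cos v) (sin v) = 0) by (rewrite <- H; ring).
  apply Rmult_integral in H0; destruct H0; auto. lra.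
Qed.

Lemma pt_min a r al be ga al2 be2 ga2 v0 v1 : v0 < v1 -> a <> 0 ->
  (forall v, v0 < v < v1 -> HP a 0 0 r al be ga al2 be2 ga2 (cos v) (sin v)) ->
  phi0 r al be ga ga2 = 0 /\ phic r al ga al2 = 0 /\ phic r be ga be2 = 0.
Proof.
  intros Hv Ha H. apply (pt_lin _ _ _ v0 v1 Hv).
  intros v Hv'. specialize (H v Hv'). apply HP_lin in H.
  rewrite Rmult_0_r, Rmult_0_l in H.
  apply Rmult_integral in H; destruct H as [H|H].
  - apply Rmult_integral in H; destruct H; [contradiction|auto].
  - pose proof (sqrt_pos1 (pl ga al be (cos v) (sin v))); lra.
Qed.

Lemma pt_ab a b r al be ga al2 be2 ga2 v0 v1 : v0 < v1 -> 0 < r -> a <> 0 -> b <> 0 ->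
  (forall v, v0 < v < v1 -> HP a b 0 r al be ga al2 be2 ga2 (cos v) (sin v)) ->
  al = 0 /\ be = 0.
Proof.
  intros Hv Hr Ha Hb H.
  assert (H3 : forall v, v0 < v < v1 ->
    a ^ 2 * pl (phi0 r al be ga ga2) (phic r al ga al2) (phic r be ga be2) (cos v) (sin v) ^ 2
    * (1 + pl ga al be (cos v) (sin v) ^ 2)
    - 4 * b ^ 2 * pl ga2 al2 be2 (cos v) (sin v) ^ 2 = 0).
  { intros v Hv'. pose proof (HP_sq _ _ _ _ _ _ _ _ _ _ _ _ (H v Hv')) as E.
    rewrite <- E. ring. }
  destruct (trig_T v0 v1 (fun x y =>
    a ^ 2 * pl (phi0 r al be ga ga2) (phic r al ga al2) (phic r be ga be2) x y ^ 2
    * (1 + pl ga al be x y ^ 2)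
    - 4 * b ^ 2 * pl ga2 al2 be2 x y ^ 2 = 0) Hv H3) as [cc [ss [eps [Hcs [Heps HT]]]]].
  set (P1 := Lpoly cc ss ga al be).
  set (Q1 := Lpoly cc ss ga2 al2 be2).
  set (F1 := Lpoly cc ss (phi0 r al be ga ga2) (phic r al ga al2) (phic r be ga be2)).
  set (S1 := padd (pmul PD PD) (pmul P1 P1)).
  set (big := padd (pscal (a ^ 2) (pmul (pmul F1 F1) S1))
                   (pscal (-4 * b ^ 2) (pmul (pmul Q1 Q1) (pmul PD PD)))).
  assert (HZ : forall T, 0 < T < eps -> Peval big T = 0).
  { intros T HT0. specialize (HT T HT0).
    unfold big, S1, F1, Q1, P1. prw.
    match type of HT with ?G = 0 => transitivity ((1 + T ^ 2) ^ 4 * G) end.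
    - ring.
    - rewrite HT; ring. }
  apply evali in HZ; [|exact Heps].
  unfold big, S1, F1, Q1, P1 in HZ. crw_in HZ.
  apply cscal_eq0 in HZ; [|nra].
  destruct (cmul_eq0 _ _ HZ) as [HF|HP1].
  2: { apply csq_eq0 in HP1. destruct (L_zero _ _ _ _ Hcs HP1); auto. }
  apply csq_eq0 in HF. destruct (L_zero _ _ _ _ Hcs HF) as [Hc1 Hc2].
  destruct (Classical_Prop.classic (al = 0 /\ be = 0)) as [|Hab]; [assumption|exfalso].
  set (ka := 2 * ga / r). set (et := ga2 - ka * ga).
  set (m := a ^ 2 * phi0 r al be ga ga2 ^ 2).
  assert (Hal2 : al2 = 2 * ga * al / r) by (unfold phic in Hc1; field_simplify; lra || (apply (Rmult_eq_reg_l r); [field_simplify; lra|lra])).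
  assert (Hbe2 : be2 = 2 * ga * be / r) by (unfold phic in Hc2; apply (Rmult_eq_reg_l r); [field_simplify; lra|lra]).
  assert (Hq : forall v, v0 < v < v1 ->
    (m - 4 * b ^ 2 * et ^ 2) + (-8 * b ^ 2 * et * ka) * pl ga al be (cos v) (sin v)
     + (m - 4 * b ^ 2 * ka ^ 2) * pl ga al be (cos v) (sin v) ^ 2 = 0).
  { intros v Hv'. rewrite <- (H3 v Hv'). rewrite Hc1, Hc2.
    unfold m, et, ka. rewrite Hal2, Hbe2. unfold pl. field. lra. }
  destruct (pt_quad _ _ _ _ _ _ v0 v1 Hv Hab Hq) as [HA [HB HC]].
  assert (Hb2 : 0 < b ^ 2) by (apply pow2_gt_0; auto).
  assert (Hek : et * ka = 0) by nra.
  assert (Hk2 : ka ^ 2 = et ^ 2).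
  { assert (b ^ 2 * (ka ^ 2 - et ^ 2) = 0) by lra.
    apply Rmult_integral in H0; destruct H0; lra. }
  assert (Hk4 : (ka ^ 2) ^ 2 = 0).
  { replace ((ka ^ 2) ^ 2) with (ka ^ 2 * ka ^ 2) by ring. rewrite Hk2 at 2.
    replace (ka ^ 2 * et ^ 2) with ((et * ka) ^ 2) by ring. rewrite Hek; ring. }
  assert (Hk : ka = 0).
  { destruct (Req_dec ka 0) as [|Hn]; auto.
    exfalso. apply (pow_nonzero (ka ^ 2) 2); auto. apply pow_nonzero; auto. }
  assert (He : et = 0) by nra.
  assert (Hm : m = 0) by nra.
  assert (Hga : ga = 0).
  { unfold ka in Hk. apply (Rmult_eq_reg_r (/ r)); [|apply Rinv_neq_0_compat; lra].
    unfold Rdiv in Hk. lra. }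
  assert (Hga2 : ga2 = 0) by (unfold et in He; rewrite Hk in He; lra).
  unfold m, phi0 in Hm. rewrite Hga, Hga2 in Hm.
  assert (Ha2 : 0 < a ^ 2) by (apply pow2_gt_0; auto).
  assert (0 < 1 + al ^ 2 + be ^ 2 + 0 ^ 2 - r * 0) by nra.
  nra.
Qed.

Lemma const_of_deriv0 (h : R -> R) u0 u1 :
  (forall x, u0 < x < u1 -> is_derive h x 0) ->
  forall x y, u0 < x < u1 -> u0 < y < u1 -> h x = h y.
Proof.
  intros Hd x y Hx Hy.
  destruct (MVT_gen h x y (fun _ => 0)) as [z [Hz Heq]].
  - intros z Hz. apply Hd.
    pose proof (Rmin_l x y); pose proof (Rmin_r x y);
    pose proof (Rmax_l x y); pose proof (Rmax_r x y).
    destruct (Rle_dec x y); [rewrite Rmin_left, Rmax_right in Hz by lra| rewrite Rmin_right, Rmax_left in Hz by lra]; lra.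
  - intros z Hz. apply continuity_pt_filterlim. apply (@ex_derive_continuous R_AbsRing R_NormedModule h z).
    exists 0. apply Hd.
    destruct (Rle_dec x y); [rewrite Rmin_left, Rmax_right in Hz by lra| rewrite Rmin_right, Rmax_left in Hz by lra]; lra.
  - lra.
Qed.

Lemma const_of_D0 (h : R -> R) u0 u1 :
  smooth_on u0 u1 h -> (forall x, u0 < x < u1 -> Derive h x = 0) ->
  forall x y, u0 < x < u1 -> u0 < y < u1 -> h x = h y.
Proof.
  intros Hs H0. apply const_of_deriv0. intros x Hx. rewrite <- (H0 x Hx).
  apply Derive_correct. exact (sm1 _ _ _ _ Hs Hx).
Qed.

Lemma affine_of (f : R -> R) u0 u1 : u0 < u1 ->
  smooth_on u0 u1 f -> (forall x, u0 < x < u1 -> Derive (Derive f) x = 0) ->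
  exists a1 b1, forall u, u0 < u < u1 -> f u = a1 * u + b1.
Proof.
  intros Hu Hs H0. set (m := (u0 + u1) / 2).
  assert (Hm : u0 < m < u1) by (unfold m; lra).
  assert (Hc : forall x, u0 < x < u1 -> Derive f x = Derive f m).
  { intros x Hx. apply (const_of_deriv0 (Derive f) u0 u1); auto.
    intros z Hz. rewrite <- (H0 z Hz). apply Derive_correct. exact (sm2 _ _ _ _ Hs Hz). }
  exists (Derive f m), (f m - Derive f m * m). intros u Hu'.
  assert (E : (fun x => f x - Derive f m * x) u = (fun x => f x - Derive f m * x) m).
  { apply (const_of_deriv0 (fun x => f x - Derive f m * x) u0 u1); auto. intros z Hz.
    auto_derive. exact (sm1 _ _ _ _ Hs Hz).
    change (Derive (fun x => f x) z) with (Derive f z). rewrite (Hc z Hz). ring. }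
  simpl in E. lra.
Qed.

Lemma ratio_const (f r : R -> R) u0 u1 : u0 < u1 ->
  smooth_on u0 u1 f -> smooth_on u0 u1 r -> (forall u, u0 < u < u1 -> 0 < r u) ->
  (forall x, u0 < x < u1 -> 2 * Derive r x * Derive f x - r x * Derive (Derive f) x = 0) ->
  exists lam, forall u, u0 < u < u1 -> Derive f u = lam * r u ^ 2.
Proof.
  intros Hu Hf Hr Hp H0. set (m := (u0 + u1) / 2).
  assert (Hm : u0 < m < u1) by (unfold m; lra).
  exists (Derive f m / r m ^ 2). intros u Hu'.
  assert (E : (fun x => Derive f x / r x ^ 2) u = (fun x => Derive f x / r x ^ 2) m).
  { apply (const_of_deriv0 (fun x => Derive f x / r x ^ 2) u0 u1); auto. intros z Hz.
    pose proof (Hp z Hz) as Hpz.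
    assert (Hd := is_derive_div (Derive f) (fun x => r x ^ 2) z _ _
      (Derive_correct _ _ (sm2 _ _ _ _ Hf Hz))
      (is_derive_pow r 2 z _ (Derive_correct _ _ (sm1 _ _ _ _ Hr Hz)))
      (pow_nonzero (r z) 2 ltac:(lra))).
    replace 0 with ((Derive (Derive f) z * r z ^ 2 - Derive f z * (INR 2 * Derive r z * r z ^ Nat.pred 2)) / (r z ^ 2) ^ 2).
    exact Hd.
    specialize (H0 z Hz).
    assert (Hdd : Derive (Derive f) z = 2 * Derive r z * Derive f z / r z).
    { apply (Rmult_eq_reg_l (r z)); [|lra]. field_simplify; lra. }
    rewrite Hdd. simpl. field. lra. }
  cbv beta in E. pose proof (Hp u Hu'); pose proof (Hp m Hm).
  rewrite <- E. field. lra.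
Qed.

Theorem theorem1p3 (a b c : R) (u0 u1 v0 v1 : R) (f g r : R -> R) :
  a ^ 2 + b ^ 2 <> 0 ->
  u0 < u1 -> v0 < v1 ->
  smooth_on u0 u1 f -> smooth_on u0 u1 g -> smooth_on u0 u1 r ->
  (forall u, u0 < u < u1 -> 0 < r u) ->
  (forall u v, u0 < u < u1 -> v0 < v < v1 ->
     a * mean_curv (circle_surface f g r) u v
     + b * gauss_curv (circle_surface f g r) u v = c) ->
  is_revolution u0 u1 f g r \/ is_riemann_example u0 u1 f g r
  \/ is_generalized_cone u0 u1 f g r.
Proof.
  intros Hab Hu Hv Hf Hg Hr Hrp Hc.
  assert (HPall : forall u, u0 < u < u1 -> forall v, v0 < v < v1 ->
    HP a b c (r u) (Derive f u) (Derive g u) (Derive r u)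
       (Derive (Derive f) u) (Derive (Derive g) u) (Derive (Derive r) u) (cos v) (sin v)).
  { intros u Hu' v Hv'.
    assert (Hcs : cos v ^ 2 + sin v ^ 2 = 1).
    { pose proof (sin2_cos2 v) as E. unfold Rsqr in E. lra. }
    pose proof (key (circle_surface f g r) u v a b c (r u) (Derive f u) (Derive g u) (Derive r u)
       (Derive (Derive f) u) (Derive (Derive g) u) (Derive (Derive r) u) (cos v) (sin v)
       (Hrp u Hu') ltac:(lra)
       (Xu_eq u0 u1 f g r Hf Hg Hr u v Hu') (Xv_eq f g r u v)
       (Xuu_eq u0 u1 f g r Hf Hg Hr u v Hu') (Xuv_eq u0 u1 f g r Hf Hg Hr u v Hu')
       (Xvv_eq f g r u v) (Hc u v Hu' Hv')) as K.
    unfold HP. rewrite Hcs in K. exact K. }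
  set (m := (u0 + u1) / 2).
  assert (Hm : u0 < m < u1) by (unfold m; lra).
  assert (Hrev : (forall u, u0 < u < u1 -> Derive f u = 0 /\ Derive g u = 0) ->
                 is_revolution u0 u1 f g r).
  { intros H0. exists (f m), (g m). intros u Hu'. split.
    - apply (const_of_D0 f u0 u1 Hf); auto. intros x Hx; apply H0; auto.
    - apply (const_of_D0 g u0 u1 Hg); auto. intros x Hx; apply H0; auto. }
  destruct (Req_dec c 0) as [Hc0|Hcn].
  2: { left. apply Hrev. intros u Hu'.
       apply (pt_c_nz a b c (r u) _ _ _ _ _ _ v0 v1 Hv (Hrp u Hu') Hcn (HPall u Hu')). }
  subst c.
  destruct (Req_dec a 0) as [Ha0|Han].
  - subst a. assert (Hb : b <> 0) by (intro; subst; apply Hab; ring).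
    right; right.
    assert (H2 : forall u, u0 < u < u1 ->
      Derive (Derive r) u = 0 /\ Derive (Derive f) u = 0 /\ Derive (Derive g) u = 0).
    { intros u Hu'. apply (pt_K0 b (r u) (Derive f u) (Derive g u) (Derive r u) _ _ _ v0 v1 Hv Hb (HPall u Hu')). }
    destruct (affine_of f u0 u1 Hu Hf) as [a1 [b1 Ef]]; [intros; apply H2; auto|].
    destruct (affine_of g u0 u1 Hu Hg) as [a2 [b2 Eg]]; [intros; apply H2; auto|].
    destruct (affine_of r u0 u1 Hu Hr) as [a3 [b3 Er]]; [intros; apply H2; auto|].
    exists a1, b1, a2, b2, a3, b3. intros u Hu'. auto.
  - destruct (Req_dec b 0) as [Hb0|Hbn].
    + subst b.
      assert (H2 : forall u, u0 < u < u1 ->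
        phi0 (r u) (Derive f u) (Derive g u) (Derive r u) (Derive (Derive r) u) = 0 /\
        phic (r u) (Derive f u) (Derive r u) (Derive (Derive f) u) = 0 /\
        phic (r u) (Derive g u) (Derive r u) (Derive (Derive g) u) = 0).
      { intros u Hu'. apply (pt_min a (r u) _ _ _ _ _ _ v0 v1 Hv Han (HPall u Hu')). }
      destruct (ratio_const f r u0 u1 Hu Hf Hr Hrp) as [lam Hl].
      { intros x Hx. destruct (H2 x Hx) as [_ [E _]]. unfold phic in E. lra. }
      destruct (ratio_const g r u0 u1 Hu Hg Hr Hrp) as [mu Hmu].
      { intros x Hx. destruct (H2 x Hx) as [_ [_ E]]. unfold phic in E. lra. }
      destruct (Req_dec (lam ^ 2 + mu ^ 2) 0) as [Hlm|Hlm].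
      * left. apply Hrev. intros u Hu'.
        assert (lam = 0) by nra. assert (mu = 0) by nra.
        rewrite (Hl u Hu'), (Hmu u Hu'). subst; split; ring.
      * right; left. exists lam, mu. split; auto. intros u Hu'.
        destruct (H2 u Hu') as [E _]. unfold phi0 in E.
        rewrite (Hl u Hu'), (Hmu u Hu') in E.
        split; [apply Hl; auto|]. split; [apply Hmu; auto|].
        change (Derive_n r 2 u) with (Derive (Derive r) u). lra.
    + left. apply Hrev. intros u Hu'.
      apply (pt_ab a b (r u) _ _ _ _ _ _ v0 v1 Hv (Hrp u Hu') Han Hbn (HPall u Hu')).
Qed.
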